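(* Let $(\mathcal{F}_n)_{n=0}^\infty$ be a sequence of regular families such that $\mathcal{F}_0$ contains all singleton subsets of $\mathbb{N}$, and let $(\theta_n)_{n=1}^\infty$ be a nonincreasing null sequence in $(0,1)$. Choose a strictly increasing sequence of integers $(m_k)_{k=0}^\infty$ with $m_0=0$ and $\theta_{m_{k+1}}\le \frac12\theta_{m_k}$ for all $k\in\mathbb{N}$. For $n\in\mathbb{N}$ with $m_{k-1}<n\le m_k$, let $\mathcal{G}_n=\{F\in\mathcal{F}_n : k\le F\}\cup\mathcal{S}_0$. Then $T(\mathcal{F}_0,(\theta_n,\mathcal{F}_n)_{n=1}^\infty)$ is isomorphic to $T(\mathcal{F}_0,(\theta_n,\mathcal{G}_n)_{n=1}^\infty)$ via the formal identity (i.e. the two norms are equivalent on $c_{00}$).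
   Context: $[\mathbb{N}]^{<\infty}$ denotes the set of finite subsets of $\mathbb{N}$, topologized as a subspace of $2^{\mathbb{N}}$ with the product topology. For finite $E,F\subseteq\mathbb{N}$, $E<F$ means $\max E<\min F$ and $E\le F$ means $\max E\le\min F$ (with $\max\emptyset=0$, $\min\emptyset=\infty$); $k\le F$ abbreviates $\{k\}\le F$. A family $\mathcal{F}\subseteq[\mathbb{N}]^{<\infty}$ is regular if it is hereditary ($G\subseteq F\in\mathcal{F}\Rightarrow G\in\mathcal{F}$), spreading (if $\{n_1<\dots<n_k\}\in\mathcal{F}$ and $m_1<\dots<m_k$ with $m_i\ge n_i$ for all $i$, then $\{m_1,\dots,m_k\}\in\mathcal{F}$), and compact. $\mathcal{S}_0=\{\{n\}:n\in\mathbb{N}\}\cup\{\emptyset\}$. $c_{00}$ is the space of finitely supported real sequences with unit vectors $(e_k)$; for $x=\sum a_ke_k$ and finite $E$, $Ex=\sum_{k\in E}a_ke_k$, and for a regular $\mathcal{F}$, $\|x\|_{\mathcal{F}}=\sup_{F\in\mathcal{F}}\sum_{k\in F}|a_k|$. A sequence $E_1<\dots<E_k$ of finite sets is $\mathcal{F}$-admissible if $\{\min E_1,\dots,\min E_k\}\in\mathcal{F}$. Given regular families $(\mathcal{F}_n)_{n\ge0}$ with $\mathcal{F}_0$ containing all singletons and a nonincreasing null sequence $(\theta_n)_{n\ge1}$ in $(0,1)$, the mixed Tsirelson space $T(\mathcal{F}_0,(\theta_n,\mathcal{F}_n)_{n=1}^\infty)$ is the completion of $c_{00}$ under the norm implicitly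 defined by $\|x\|=\max\{\|x\|_{\mathcal{F}_0},\ \sup_{n\in\mathbb{N}}\sup\theta_n\sum_{i=1}^k\|E_ix\|\}$, the inner supremum over all $\mathcal{F}_n$-admissible sequences $(E_i)_{i=1}^k$. *)

(* Defs.v *)
From HB Require Import structures.
From mathcomp Require Import all_boot all_order all_algebra.
From mathcomp Require Import finmap.
From mathcomp Require Import all_classical all_reals all_analysis.
Set Implicit Arguments. Unset Strict Implicit. Unset Printing Implicit Defensive.
Import Order.TTheory GRing.Theory Num.Theory.
Import numFieldNormedType.Exports.
Local Open Scope classical_set_scope.
Local Open Scope fset_scope.
Local Open Scope ring_scope.

(* Convention: the paper's N = {1,2,3,...}; we use nat and require all
   sets to avoid 0 (and vectors of c00 to vanish at coordinate 0). *)

Definition Nset (E : {fset nat}) : Prop := (0%N \notin E).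

(* E < F : max E < min F (with max empty = 0, min empty = oo) *)
Definition fset_lt (E F : {fset nat}) : bool :=
  [forall a : E, [forall b : F, (val a < val b)%N]].

Definition nat_le_fset (k : nat) (F : {fset nat}) : Prop :=
  forall b, b \in F -> (k <= b)%N.

Definition fmin (E : {fset nat}) : nat := head 0%N (sort leq E).

Definition indic (F : {fset nat}) : cantor_space := fun n => n \in F.

Definition hereditary (fam : set {fset nat}) : Prop :=
  forall F G : {fset nat}, fam F -> G `<=` F -> fam G.

Definition spreading (fam : set {fset nat}) : Prop :=
  forall n m : seq nat, sorted ltn n -> sorted ltn m -> size n = size m ->
    all2 leq n m -> fam [fset x | x in n] -> fam [fset x | x in m].

Definition compact_family (fam : set {fset nat}) : Prop :=
  compact (indic @` fam).

Definition regular (fam : set {fset nat}) : Prop :=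
  (forall F, fam F -> Nset F) /\ hereditary fam /\ spreading fam /\
  compact_family fam.

Definition S0 : set {fset nat} :=
  [set F | F = fset0 \/ exists n, (0 < n)%N /\ F = [fset n]].

Section Norms.
Variable R : realType.

Definition c00 (x : nat -> R) : Prop :=
  finite_set [set k | x k != 0] /\ x 0%N = 0.

Definition restr (E : {fset nat}) (x : nat -> R) : nat -> R :=
  fun k => if k \in E then x k else 0.

Definition famnorm (fam : set {fset nat}) (x : nat -> R) : R :=
  sup [set (\sum_(k <- F) `|x k|) | F in fam].

Definition admissible (fam : set {fset nat}) (s : seq {fset nat}) : Prop :=
  (forall E, E \in s -> E != fset0 /\ Nset E) /\ sorted fset_lt s /\
  fam [fset fmin E | E in s].

Definition mT_step (Fam : nat -> set {fset nat}) (theta : nat -> R)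
  (N : (nat -> R) -> R) (x : nat -> R) : R :=
  Num.max (famnorm (Fam 0%N) x)
    (sup [set theta n.1 * \sum_(E <- n.2) N (restr E x) |
          n in [set n : nat * seq {fset nat} |
                  (0 < n.1)%N /\ admissible (Fam n.1) n.2]]).

(* the mixed Tsirelson norm of T(F_0, (theta_n, F_n)_{n>=1}) on c00:
   the supremum of the increasing iterates N_0 = ||.||_{F_0},
   N_{j+1} = mT_step N_j (the standard construction of the implicit norm) *)
Definition mTnorm (Fam : nat -> set {fset nat}) (theta : nat -> R)
  (x : nat -> R) : R :=
  sup [set iter j (mT_step Fam theta) (famnorm (Fam 0%N)) x | j in [set: nat]].

End Norms.

Definition Gfam (Fam : nat -> set {fset nat}) (m : nat -> nat) (n : nat)
  : set {fset nat} :=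
  if n == 0%N then Fam 0%N else
  setU [set F | Fam n F /\ (forall k, (m k < n <= m k.+1)%N -> nat_le_fset k.+1 F)]
  S0.

(* Main.v *)
Require Import Defs.
From HB Require Import structures.
From mathcomp Require Import all_boot all_order all_algebra.
From mathcomp Require Import finmap.
From mathcomp Require Import all_classical all_reals all_analysis.
From mathcomp Require Import ring lra.
Import Order.TTheory GRing.Theory Num.Theory.
Import numFieldNormedType.Exports.
Local Open Scope classical_set_scope.
Local Open Scope ring_scope.
Set Implicit Arguments. Unset Strict Implicit. Unset Printing Implicit Defensive.

Section SupHelp.
Variable R : realType.

Lemma sup_le_ub (S : set R) b : (forall y, S y -> y <= b) -> 0 <= b -> sup S <= b.
Proof.
move=> H b0; have [->|ne] := eqVneq S set0; first by rewrite sup0.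
by apply: ge_sup => //; apply/set0P.
Qed.

Lemma sup_ge0 (S : set R) : (forall y, S y -> 0 <= y) -> 0 <= sup S.
Proof.
move=> H; case: (pselect (has_sup S)) => [[[y Sy] ub]|/sup_out -> //].
by apply: le_trans (H y Sy) _; apply: ub_le_sup.
Qed.

Lemma le_sup_el (S : set R) y b : S y -> (forall z, S z -> z <= b) -> y <= sup S.
Proof. by move=> Sy ub; apply: ub_le_sup => //; exists b. Qed.

End SupHelp.

Lemma fset_ltP (E F : {fset nat}) :
  reflect (forall a b, a \in E -> b \in F -> (a < b)%N) (fset_lt E F).
Proof.
apply: (iffP forallP) => H.
  move=> a b aE bF; have /forallP := H [` aE]%fset; move/(_ [` bF]%fset) => //.
by move=> a; apply/forallP => b; apply: H (fsvalP a) (fsvalP b).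
Qed.

Lemma fmin_spec (E : {fset nat}) : E != fset0 ->
  fmin E \in E /\ forall e, e \in E -> (fmin E <= e)%N.
Proof.
move=> En; rewrite /fmin.
have := sort_sorted leq_total E.
have ms := mem_sort leq E.
case eq: (sort leq E) => [|a r] /=.
  move: En; case/fset0Pn => e eE.
  by have := ms e; rewrite eq eE.
move=> pa; split; first by rewrite -ms eq mem_head.
move=> e; rewrite -ms eq inE => /orP [/eqP -> //|er].
have /allP := order_path_min leq_trans pa.
by move/(_ e er).
Qed.

Lemma fset_lt_fmin (E F : {fset nat}) : E != fset0 -> F != fset0 ->
  fset_lt E F -> (fmin E < fmin F)%N.
Proof.
move=> /fmin_spec [h1 _] /fmin_spec [h2 _] /fset_ltP; exact.
Qed.

Lemma fset_lt_trans_in :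
  {in [pred E : {fset nat} | E != fset0] & &, transitive fset_lt}.
Proof.
move=> F E G Fn _ _ /fset_ltP h1 /fset_ltP h2; apply/fset_ltP => a c aE cG.
move: Fn; rewrite inE => /fset0Pn [b bF].
exact: (ltn_trans (h1 a b aE bF) (h2 b c bF cG)).
Qed.

Lemma adm_pairwise (P : set {fset nat}) s : admissible P s -> pairwise fset_lt s.
Proof.
move=> [h [so _]].
rewrite -(sorted_pairwise_in fset_lt_trans_in) //.
by apply/allP => E /h [].
Qed.

Lemma fset_lt_disj (E F : {fset nat}) k : fset_lt E F -> k \in F -> k \notin E.
Proof.
move=> /fset_ltP h kF; apply/negP => kE; have := h k k kE kF.
by rewrite ltnn.
Qed.

Section Sums.
Variable R : realType.
Variable c : nat -> R.
Hypothesis c0 : forall i, 0 <= c i.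
Definition gs (A : {fset nat}) := \sum_(i <- A) c i.

Lemma gs_ge0 A : 0 <= gs A.
Proof. by apply: sumr_ge0 => i _. Qed.

Lemma gs0 : gs fset0 = 0.
Proof. by rewrite /gs big_seq_fset0. Qed.

Lemma gs_split (A : {fset nat}) (p : pred nat) :
  gs A = gs [fset i in A | p i]%fset + gs [fset i in A | ~~ p i]%fset.
Proof. by rewrite /gs (big_fsetID _ p). Qed.

Lemma gs_splitI (A B : {fset nat}) : gs A = gs (B `&` A)%fset + gs (A `\` B)%fset.
Proof.
rewrite (gs_split A (mem B)); congr (gs _ + gs _); apply/fsetP => i; rewrite !inE //; by rewrite andbC.
Qed.

Lemma gs_sub (A B : {fset nat}) : (B `<=` A)%fset -> gs B <= gs A.
Proof.
move=> /fsubsetP sub; rewrite (gs_splitI A B).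
have -> : (B `&` A = B)%fset.
  by apply/fsetP => i; rewrite !inE; apply/andP/idP => [[]//|h]; split => //; apply: sub.
by rewrite lerDl gs_ge0.
Qed.

Lemma gs_disj (s : seq {fset nat}) : pairwise fset_lt s ->
  forall A, \sum_(E <- s) gs (E `&` A)%fset <= gs A.
Proof.
elim: s => [|E s IH] /=.
  by move=> _ A; rewrite big_nil gs_ge0.
move=> /andP [/allP hE hs] A; rewrite big_cons.
have -> : \sum_(F <- s) gs (F `&` A)%fset = \sum_(F <- s) gs (F `&` (A `\` E))%fset.
  apply: eq_big_seq => F Fs; congr gs; apply/fsetP => k; rewrite !inE.
  case kF: (k \in F) => //=.
  by rewrite (negbTE (@fset_lt_disj E F k (hE F Fs) kF)).
rewrite [leRHS](gs_splitI A E); apply: lerD => //.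
exact: IH.
Qed.

End Sums.

Section NormLemmas.
Variable R : realType.
Variable x : nat -> R.
Variable P : nat -> set {fset nat}.
Variable th : nat -> R.
Hypothesis th01 : forall n, (0 < n)%N -> 0 <= th n <= 1.

Definition NN j := iter j (mT_step P th) (famnorm (P 0%N)).
Definition admset :=
  [set n : nat * seq {fset nat} | (0 < n.1)%N /\ admissible (P n.1) n.2].
Definition stepset j (v : nat -> R) :=
  [set th n.1 * \sum_(E <- n.2) NN j (restr E v) | n in admset].
Definition L := gs (fun i => `|x i|).

Lemma NNS j (v : nat -> R) : NN j.+1 v = Num.max (famnorm (P 0%N) v) (sup (stepset j v)).
Proof. by []. Qed.

Lemma restrI (E A : {fset nat}) : restr E (restr A x) = restr (E `&` A)%fset x.
Proof.
apply: funext => k; rewrite /restr inE.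
by case: (k \in E); case: (k \in A).
Qed.

Lemma L_ge0 A : 0 <= L A.
Proof. by apply: gs_ge0. Qed.

Lemma restr_sum A (F : {fset nat}) :
  \sum_(k <- F) `|restr A x k| = L (F `&` A)%fset.
Proof.
rewrite (big_fsetID _ (mem A)) /= [X in _ + X]big1_fset ?addr0; last first.
  by move=> k; rewrite !inE => /andP [_ kA] _; rewrite /restr (negbTE kA) normr0.
have -> : [fset k in F | k \in A]%fset = (F `&` A)%fset.
  by apply/fsetP => k; rewrite !inE.
by apply: eq_big_seq => k; rewrite !inE => /andP [_ kA]; rewrite /restr kA.
Qed.

Lemma fam_ub (Q : set {fset nat}) A : famnorm Q (restr A x) <= L A.
Proof.
apply: sup_le_ub; last exact: L_ge0.
move=> _ [F QF <-]; rewrite restr_sum; apply: gs_sub => //.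
exact: fsubsetIr.
Qed.

Lemma fam_ge0 (Q : set {fset nat}) (v : nat -> R) : 0 <= famnorm Q v.
Proof. by apply: sup_ge0 => _ [F QF <-]; apply: sumr_ge0. Qed.

Lemma fam_el (Q : set {fset nat}) A F : Q F ->
  \sum_(k <- F) `|restr A x k| <= famnorm Q (restr A x).
Proof.
move=> QF; apply: (@le_sup_el _ _ _ (L A)); first by exists F.
by move=> _ [G QG <-]; rewrite restr_sum; apply: gs_sub => //; exact: fsubsetIr.
Qed.

Lemma NN_ge0 j (v : nat -> R) : 0 <= NN j v.
Proof.
case: j => [|j]; first exact: fam_ge0.
by rewrite NNS le_max fam_ge0.
Qed.

Lemma stepsetE j A :
  stepset j (restr A x) =
  [set th n.1 * \sum_(E <- n.2) NN j (restr (E `&` A)%fset x) | n in admset].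
Proof.
rewrite /stepset; congr image; apply: funext => n; congr (_ * _).
by apply: eq_bigr => E _; rewrite restrI.
Qed.

Lemma step_bound j A :
  (forall B, NN j (restr B x) <= L B) ->
  forall z, stepset j (restr A x) z -> z <= L A.
Proof.
move=> IH z; rewrite stepsetE => -[[n s] /= [n0 adm] <-].
have /andP [t0 t1] := th01 n0.
apply: (@le_trans _ _ (th n * L A)).
  apply: ler_wpM2l => //; apply: le_trans (gs_disj _ (adm_pairwise adm) A) => //.
  by apply: ler_sum => E _; apply: IH.
by rewrite ler_piMl // L_ge0.
Qed.

Lemma NN_ub j A : NN j (restr A x) <= L A.
Proof.
elim: j A => [|j IH] A; first exact: fam_ub.
rewrite NNS ge_max fam_ub /=; apply: sup_le_ub; last exact: L_ge0.
exact: step_bound.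
Qed.

Lemma step_el j A n s : (0 < n)%N -> admissible (P n) s ->
  th n * \sum_(E <- s) NN j (restr (E `&` A)%fset x) <= NN j.+1 (restr A x).
Proof.
move=> n0 adm; rewrite NNS le_max; apply/orP; right.
apply: (@le_sup_el _ _ _ (L A)); first by rewrite stepsetE; exists (n, s).
apply: step_bound => B; exact: NN_ub.
Qed.

Lemma fam_le_NN j A : famnorm (P 0%N) (restr A x) <= NN j (restr A x).
Proof. by case: j => [|j] //; rewrite NNS le_max lexx. Qed.

Lemma NN_le j A b : famnorm (P 0%N) (restr A x) <= b ->
  (forall n s, (0 < n)%N -> admissible (P n) s ->
     th n * \sum_(E <- s) NN j (restr (E `&` A)%fset x) <= b) ->
  NN j.+1 (restr A x) <= b.
Proof.
move=> hf hs; rewrite NNS ge_max hf /=; apply: sup_le_ub.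
  by move=> z; rewrite stepsetE => -[[n s] /= [n0 adm] <-]; apply: hs.
exact: le_trans (fam_ge0 _ _) hf.
Qed.

Lemma NN0 j : NN j (restr fset0 x) = 0.
Proof.
apply/eqP; rewrite eq_le NN_ge0 andbT; apply: le_trans (NN_ub j fset0) _.
by rewrite /L gs0.
Qed.

Lemma fam_tri (Q : set {fset nat}) B C :
  famnorm Q (restr (B `|` C)%fset x) <= famnorm Q (restr B x) + famnorm Q (restr C x).
Proof.
  apply: sup_le_ub; last by apply: addr_ge0; apply: fam_ge0.
  move=> _ [F PF <-].
  apply: le_trans (lerD (fam_el B PF) (fam_el C PF)).
  rewrite -big_split /=; apply: ler_sum => k _; rewrite /restr !inE.
  by case: (k \in B); case: (k \in C) => /=; rewrite ?normr0 ?addr0 ?add0r ?lerDl.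
Qed.

Lemma NN_tri j B C :
  NN j (restr (B `|` C)%fset x) <= NN j (restr B x) + NN j (restr C x).
Proof.
elim: j B C => [|j IH] B C; first exact: fam_tri.
apply: NN_le.
  exact: le_trans (fam_tri _ B C) (lerD (fam_le_NN j.+1 B) (fam_le_NN j.+1 C)).
move=> n s n0 adm; have /andP [t0 _] := th01 n0.
apply: le_trans (lerD (step_el j B n0 adm) (step_el j C n0 adm)).
rewrite -mulrDr -big_split /=; apply: ler_wpM2l => //; apply: ler_sum => E _.
have -> : (E `&` (B `|` C) = (E `&` B) `|` (E `&` C))%fset by rewrite fsetIUr.
exact: IH.
Qed.

Lemma NN_mono j B C : (B `<=` C)%fset -> NN j (restr B x) <= NN j (restr C x).
Proof.
elim: j B C => [|j IH] B C /fsubsetP sub.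
  apply: sup_le_ub; last exact: fam_ge0.
  move=> _ [F PF <-]; apply: le_trans (fam_el C PF); apply: ler_sum => k _.
  rewrite /restr; case kB: (k \in B); first by rewrite (sub k kB).
  by rewrite normr0.
apply: NN_le.
  apply: le_trans (fam_le_NN j.+1 C); apply: sup_le_ub; last exact: fam_ge0.
  move=> _ [F PF <-]; apply: le_trans (fam_el C PF); apply: ler_sum => k _.
  rewrite /restr; case kB: (k \in B); first by rewrite (sub k kB).
  by rewrite normr0.
move=> n s n0 adm; have /andP [t0 _] := th01 n0.
apply: le_trans (step_el j C n0 adm); apply: ler_wpM2l => //; apply: ler_sum => E _.
apply: IH; apply/fsubsetP => k; rewrite !inE => /andP [-> /sub ->].
by [].
Qed.

Lemma NN_incr j A : NN j (restr A x) <= NN j.+1 (restr A x).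
Proof.
elim: j A => [|j IH] A; first by rewrite NNS le_max lexx.
apply: NN_le; first exact: fam_le_NN.
move=> n s n0 adm; have /andP [t0 _] := th01 n0.
apply: le_trans (step_el j.+1 A n0 adm); apply: ler_wpM2l => //; apply: ler_sum => E _.
exact: IH.
Qed.

Lemma NN_le_mT j A : NN j (restr A x) <= mTnorm P th (restr A x).
Proof.
apply: (@le_sup_el _ _ _ (L A)); first by exists j.
by move=> _ [i _ <-]; apply: NN_ub.
Qed.

Lemma mT_le A b : (forall j, NN j (restr A x) <= b) -> 0 <= b ->
  mTnorm P th (restr A x) <= b.
Proof. by move=> h b0; apply: sup_le_ub => // _ [i _ <-]; exact: h. Qed.

End NormLemmas.

Lemma fset_map (g : {fset nat} -> nat) (t : seq {fset nat}) :
  [fset y | y in map g t]%fset = [fset g E | E in t]%fset.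
Proof.
apply/fsetP => k; apply/imfsetP/imfsetP => [[y /mapP [E Et ->] ->]|[E Et ->]].
  by exists E.
by exists (g E) => //; apply: map_f.
Qed.

Lemma fset_lt_sub (E F E' F' : {fset nat}) :
  (E' `<=` E)%fset -> (F' `<=` F)%fset -> fset_lt E F -> fset_lt E' F'.
Proof.
move=> /fsubsetP h1 /fsubsetP h2 /fset_ltP h; apply/fset_ltP => a b aE bF.
by apply: h; [apply: h1|apply: h2].
Qed.

Lemma all2_map_leq (t : seq {fset nat}) (g h : {fset nat} -> nat) :
  (forall E, E \in t -> (g E <= h E)%N) -> all2 leq (map g t) (map h t).
Proof.
elim: t => [|E t IH] //= H; rewrite H ?mem_head //=.
by apply: IH => F Ft; apply: H; rewrite inE Ft orbT.
Qed.

Lemma pairwise_fmin (t : seq {fset nat}) :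
  all (fun E => E != fset0) t -> pairwise fset_lt t ->
  pairwise ltn (map fmin t).
Proof.
move=> ne pw; rewrite pairwise_map.
apply: (sub_in_pairwise (P := [pred E : {fset nat} | E != fset0])) pw => //.
by move=> E F En Fn /=; apply: fset_lt_fmin.
Qed.

Lemma adm_sub (Q : set {fset nat}) (f : {fset nat} -> {fset nat}) s :
  hereditary Q -> spreading Q -> (forall E, (f E `<=` E)%fset) ->
  admissible Q s -> admissible Q [seq f E | E <- s & f E != fset0].
Proof.
move=> her spr fsub adm; have pw := adm_pairwise adm.
move: adm => [ne [_ Qs]].
set s' := [seq E <- s | f E != fset0].
have s's : forall E, E \in s' -> E \in s /\ f E != fset0.
  by move=> E; rewrite mem_filter => /andP [].
have pw' : pairwise fset_lt s' by apply: pairwise_filter.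
have pwf : pairwise fset_lt (map f s').
  rewrite pairwise_map; apply: sub_pairwise pw' => E F /=; exact: fset_lt_sub.
have nef : all (fun E => E != fset0) (map f s').
  by apply/allP => F /mapP [E /s's [_ h] ->].
have nes' : all (fun E => E != fset0) s'.
  by apply/allP => E /s's [/ne [h _] _].
split.
  move=> F /mapP [E /s's [Es fE] ->]; split => //.
  have [_ nE] := ne E Es; rewrite /Nset; apply/negP => /(fsubsetP (fsub E)).
  by apply/negP.
split; first exact: pairwise_sorted.
have Q1 : Q [fset fmin E | E in s']%fset.
  apply: (her _ _ Qs); apply/fsubsetP => k /imfsetP [E /s's [Es _] ->].
  by apply/imfsetP; exists E.
rewrite -fset_map; rewrite -fset_map in Q1.
apply: spr Q1.
- by apply: pairwise_sorted; apply: pairwise_fmin.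
- by apply: pairwise_sorted; apply: pairwise_fmin.
- by rewrite !size_map.
- rewrite -map_comp; apply: all2_map_leq => E /s's [Es fE] /=.
  have [h1 _] := fmin_spec fE.
  have [En _] := ne E Es; have [_ h2] := fmin_spec En.
  by apply: h2; apply: (fsubsetP (fsub E)).
Qed.

Lemma adm_S0 s : admissible S0 s -> s = [::] \/ exists E, s = [:: E].
Proof.
case: s => [|E1 [|E2 s]]; [by left|by right; exists E1|].
move=> adm; have pw := adm_pairwise adm; move: adm => [ne [_ S0s]].
have [n1 _] := ne E1 (mem_head _ _).
have [n2 _] : E2 != fset0 /\ Nset E2 by apply: ne; rewrite !inE eqxx orbT.
have lt : (fmin E1 < fmin E2)%N.
  apply: fset_lt_fmin => //; move: pw; rewrite pairwise_cons => /andP [/allP h _].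
  by apply: h; rewrite mem_head.
have i1 : fmin E1 \in [fset fmin E | E in [:: E1, E2 & s]]%fset.
  by apply/imfsetP; exists E1 => //; rewrite mem_head.
have i2 : fmin E2 \in [fset fmin E | E in [:: E1, E2 & s]]%fset.
  by apply/imfsetP; exists E2 => //; rewrite !inE eqxx orbT.
case: S0s => [e|[p [_ e]]]; rewrite e in i1 i2.
  by rewrite inE in i1.
move: i1 i2; rewrite !inE => /eqP e1 /eqP e2.
by move: lt; rewrite e1 e2 ltnn.
Qed.

Lemma big_filter_map (R : realType) (h : {fset nat} -> R)
  (f : {fset nat} -> {fset nat}) s :
  h fset0 = 0 ->
  \sum_(E <- s) h (f E) = \sum_(F <- [seq f E | E <- s & f E != fset0]) h F.
Proof.
move=> h0; elim: s => [|E s IH]; first by rewrite !big_nil.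
rewrite /= big_cons; case: (eqVneq (f E) fset0) => [e|ne] /=.
  by rewrite e h0 add0r IH.
by rewrite big_cons IH.
Qed.

Definition lo k (E : {fset nat}) := [fset i in E | (i <= k)%N]%fset.
Definition hi k (E : {fset nat}) := [fset i in E | ~~ (i <= k)%N]%fset.

Lemma hi_sub k E : (hi k E `<=` E)%fset.
Proof. by apply/fsubsetP => i; rewrite !inE => /andP []. Qed.

Lemma sumD (R : realType) (T : Type) (s : seq T) (a b : T -> R) :
  \sum_(i <- s) (a i + b i) = \sum_(i <- s) a i + \sum_(i <- s) b i.
Proof. exact: big_split. Qed.

Section Main.
Variable R : realType.
Variable x : nat -> R.
Variable Fam : nat -> set {fset nat}.
Variable th : nat -> R.
Variable m : nat -> nat.
Hypothesis reg : forall n, regular (Fam n).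
Hypothesis th01 : forall n, (0 < n)%N -> 0 < th n < 1.
Hypothesis thmono : forall n p, (0 < n)%N -> (n <= p)%N -> th p <= th n.
Hypothesis m0 : m 0%N = 0%N.
Hypothesis mS : forall k, (m k < m k.+1)%N.
Hypothesis mhalf : forall k, (0 < k)%N -> th (m k.+1) <= th (m k) / 2.

Lemma th01' n : (0 < n)%N -> 0 <= th n <= 1.
Proof. by move=> /th01 /andP [a b]; rewrite ltW // ltW. Qed.

Definition w (i : nat) : R := 2 * (2^-1) ^+ i.
Definition phi := gs (fun i => w i * `|x i|).

Lemma w_ge0 i : 0 <= w i.
Proof. by rewrite /w mulr_ge0 // exprn_ge0. Qed.

Lemma phi_ge0 A : 0 <= phi A.
Proof. by apply: gs_ge0 => i; rewrite mulr_ge0 ?w_ge0. Qed.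

Lemma m_ge k : (k <= m k)%N.
Proof. by elim: k => [|k IH] //; exact: leq_ltn_trans IH (mS k). Qed.

Lemma m_mono a b : (a <= b)%N -> (m a <= m b)%N.
Proof.
move/subnK => <-; elim: (b - a)%N => [|d IH] //=.
exact: leq_trans IH (ltnW (mS _)).
Qed.

Lemma find_k n : (0 < n)%N -> exists k, (m k < n <= m k.+1)%N.
Proof.
move=> n0; have ex : exists k, (n <= m k)%N by exists n; apply: m_ge.
case: (ex_minnP ex) => k0 hk0 hmin.
case: k0 hk0 hmin => [|k] hk hmin; first by move: hk; rewrite m0 leqNgt n0.
exists k; rewrite hk andbT ltnNge; apply/negP => /hmin.
by rewrite ltnn.
Qed.

Lemma k_uniq k k' n : (m k < n <= m k.+1)%N -> (m k' < n <= m k'.+1)%N -> k' = k.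
Proof.
move=> /andP [a b] /andP [c d].
case: (ltngtP k' k) => // h.
  by have := leq_ltn_trans (leq_trans d (m_mono h)) a; rewrite ltnn.
by have := leq_ltn_trans (leq_trans b (m_mono h)) c; rewrite ltnn.
Qed.

Lemma thm k : (0 < k)%N -> th (m k) <= w k.
Proof.
case: k => [//|k] _; elim: k => [|k IH].
  have m10 : (0 < m 1)%N by move: (mS 0); rewrite m0.
  have /andP [_ h] := th01' m10.
  by rewrite /w expr1 divff.
apply: le_trans (mhalf _) _ => //.
have -> : w k.+2 = w k.+1 / 2 by rewrite /w exprS mulrCA mulrC.
by rewrite ler_pdivrMr // divfK //.
Qed.

Lemma th_w k n i : (m k < n)%N -> (i <= k)%N -> th n <= w i.
Proof.
move=> kn ik.
have n0 : (0 < n)%N by apply: leq_ltn_trans kn.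
case: k kn ik => [|k] kn ik.
  move: ik; rewrite leqn0 => /eqP ->.
  have /andP [_ h] := th01' n0; apply: le_trans h _.
  by rewrite /w expr0 mulr1 ler1n.
have mk0 : (0 < m k.+1)%N by apply: leq_trans (m_ge _).
apply: le_trans (thmono mk0 (ltnW kn)) _.
apply: le_trans (thm (ltn0Sn _)) _.
rewrite /w ler_pM2l // ler_wiXn2l //.
by rewrite invr_le1 // ?ler1n // unitf_gt0.
Qed.




Lemma easy j A :
  NN (Gfam Fam m) th j (restr A x) <= NN Fam th j (restr A x).
Proof.
elim: j A => [|j IH] A; first exact: lexx.
apply: NN_le; first exact: (fam_le_NN x Fam th j.+1 A).
move=> n s n0 adm.
have n0' : (n == 0)%N = false by rewrite eqn0Ngt n0.
have [admF|admS] : admissible (Fam n) s \/ admissible S0 s.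
  move: adm => [h1 [h2 h3]]; rewrite /Gfam n0' in h3.
  by case: h3 => [[h3 _]|h3]; [left|right].
  have /andP [t0 _] := th01' n0.
  apply: le_trans _ (step_el x th01' j A n0 admF).
  by apply: ler_wpM2l => //; apply: ler_sum => E _; apply: IH.
have /andP [t0 t1] := th01' n0.
case: (adm_S0 admS) => [->|[E ->]].
  by rewrite big_nil mulr0; apply: NN_ge0.
rewrite big_cons big_nil addr0.
apply: le_trans (_ : NN (Gfam Fam m) th j (restr (E `&` A)%fset x) <= _).
  by rewrite ler_piMl // NN_ge0.
apply: le_trans (IH _) _.
apply: le_trans (NN_mono x Fam th01' j (fsubsetIr E A)) _.
exact: (NN_incr x Fam th01').
Qed.

Lemma hard j A :
  NN Fam th j (restr A x) <= NN (Gfam Fam m) th j (restr A x) + phi A.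
Proof.
elim: j A => [|j IH] A.
  by rewrite -[X in X <= _]addr0; apply: lerD; [exact: lexx|exact: phi_ge0].
apply: NN_le.
  apply: le_trans (fam_le_NN x (Gfam Fam m) th j.+1 A) _.
  by rewrite lerDl; exact: phi_ge0.
move=> n s n0 adm.
have [k /andP [kn nk]] := find_k n0.
have [_ [her [spr _]]] := reg n.
have pw := adm_pairwise adm.
have /andP [t0 t1] := th01' n0.
set t := [seq hi k E | E <- s & hi k E != fset0].
have admt : admissible (Fam n) t := adm_sub her spr (hi_sub k) adm.
have admG : admissible (Gfam Fam m n) t.
  move: (admt) => [a [b c]]; split => //; split => //.
  have n0' : (n == 0)%N = false by rewrite eqn0Ngt n0.
  rewrite /Gfam n0'; left; split => // k' hk'.
  have e := k_uniq (introT andP (conj kn nk)) hk'; rewrite e.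
  move=> b' /imfsetP [F Ft ->].
  move: Ft => /mapP [E]; rewrite mem_filter => /andP [ne _] ->.
  have [h _] := fmin_spec ne; move: h; rewrite !inE => /andP [_].
  by rewrite -ltnNge.
apply: (@le_trans _ _ (th n * \sum_(E <- s)
    (L x (E `&` lo k A)%fset + NN Fam th j (restr (hi k E `&` A)%fset x)))).
  apply: ler_wpM2l => //; apply: ler_sum => E _.
  have -> : (E `&` A = (lo k E `&` A) `|` (hi k E `&` A))%fset.
    apply/fsetP => i; rewrite !inE.
    by case: (i \in E); case: (i <= k)%N; case: (i \in A).
  apply: le_trans (NN_tri x Fam th01' j _ _) _; apply: lerD => //.
  have -> : (lo k E `&` A = E `&` lo k A)%fset.
    apply/fsetP => i; rewrite !inE.
    by case: (i \in E); case: (i <= k)%N; case: (i \in A).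
  exact: (NN_ub x Fam th01').
rewrite sumD mulrDr.
have pa : th n * \sum_(E <- s) L x (E `&` lo k A)%fset <= phi (lo k A).
  apply: le_trans (_ : th n * L x (lo k A) <= _).
    apply: ler_wpM2l => //; apply: gs_disj => // i; exact: normr_ge0.
  rewrite /L /phi /gs mulr_sumr !big_seq; apply: ler_sum => i.
  rewrite !inE => /andP [_ ik]; apply: ler_wpM2r => //.
  exact: th_w kn ik.
have h0 : NN Fam th j (restr (fset0 `&` A)%fset x) = 0.
  by rewrite fset0I; apply: (NN0 x Fam th01').
rewrite (@big_filter_map R (fun F => NN Fam th j (restr (F `&` A)%fset x)) (hi k) s h0).
rewrite -/t.
have pb : th n * \sum_(F <- t) NN Fam th j (restr (F `&` A)%fset x) <=
    NN (Gfam Fam m) th j.+1 (restr A x) + phi (hi k A).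
  apply: le_trans (_ : th n * \sum_(F <- t) (NN (Gfam Fam m) th j (restr (F `&` A)%fset x)
       + phi (F `&` A)%fset) <= _).
    by apply: ler_wpM2l => //; apply: ler_sum => F _; apply: IH.
  rewrite sumD mulrDr; apply: lerD.
    exact: (@step_el R x (Gfam Fam m) th th01' j A n t n0 admG).
  apply: le_trans (_ : \sum_(F <- t) phi (F `&` A)%fset <= _).
    by rewrite ler_piMl // sumr_ge0 // => F _; apply: phi_ge0.
  have p0 : phi (fset0 `&` A)%fset = 0 by rewrite fset0I /phi gs0.
  rewrite -(@big_filter_map R (fun F => phi (F `&` A)%fset) (hi k) s p0).
  have -> : \sum_(E <- s) phi (hi k E `&` A)%fset = \sum_(E <- s) phi (E `&` hi k A)%fset.
    apply: eq_bigr => E _; congr phi; apply/fsetP => i; rewrite !inE.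
    by case: (i \in E); case: (i <= k)%N; case: (i \in A).
  apply: gs_disj => // i; rewrite mulr_ge0 ?w_ge0 //.
apply: le_trans (lerD pa pb) _.
rewrite [phi A](gs_split _ A (fun i => (i <= k)%N)) -/(lo k A) -/(hi k A).
by rewrite addrCA addrA lexx.
Qed.

End Main.

Lemma w_sum (R : realType) M (S : {fset nat}) :
  (forall i, i \in S -> (i < M)%N) ->
  \sum_(i <- S) (2 * (2^-1) ^+ i : R) <= 4 - 4 * (2^-1) ^+ M.
Proof.
elim: M S => [|M IH] S h.
  have -> : S = fset0.
    by apply/fsetP => i; rewrite inE; apply/negbTE/negP => /h.
  by rewrite big_seq_fset0 expr0 mulr1 subrr.
have y0 : (0 : R) <= (2^-1) ^+ M by rewrite exprn_ge0.
case: (boolP (M \in S)) => MS.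
  rewrite (big_fsetD1 M MS) /=.
  have := IH (S `\ M)%fset; set Y := (2^-1) ^+ M; move=> H.
  have {}H : \sum_(i <- (S `\ M)%fset) (2 * (2^-1) ^+ i : R) <= 4 - 4 * Y.
    apply: H => i; rewrite !inE => /andP [iM iS].
    by have := h i iS; rewrite ltnS leq_eqVlt (negbTE iM).
  rewrite exprS -/Y.
  lra.
have {}H := IH S.
have : \sum_(i <- S) (2 * (2^-1) ^+ i : R) <= 4 - 4 * (2^-1) ^+ M.
  apply: H => i iS; have := h i iS; rewrite ltnS leq_eqVlt.
  by case: eqP => [e|//]; move: MS; rewrite -e iS.
rewrite exprS; set Y := (2^-1) ^+ M in y0 *.
move=> ?; lra.
Qed.

Theorem proposition1 (R : realType) (Fam : nat -> set {fset nat})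
  (theta : nat -> R) (m : nat -> nat) :
  (forall n, regular (Fam n)) ->
  (forall n, (0 < n)%N -> Fam 0%N [fset n]%fset) ->
  (forall n, (0 < n)%N -> 0 < theta n < 1) ->
  (forall n p, (0 < n)%N -> (n <= p)%N -> theta p <= theta n) ->
  theta @ \oo --> (0 : R) ->
  m 0%N = 0%N ->
  (forall k, (m k < m k.+1)%N) ->
  (forall k, (0 < k)%N -> theta (m k.+1) <= theta (m k) / 2) ->
  exists c C : R, 0 < c /\ 0 < C /\
    forall x : nat -> R, c00 x ->
      c * mTnorm Fam theta x <= mTnorm (Gfam Fam m) theta x /\
      mTnorm (Gfam Fam m) theta x <= C * mTnorm Fam theta x.
Proof.
move=> reg h0 th01 thmono _ m0 mS mhalf.
have t01 : forall n, (0 < n)%N -> 0 <= theta n <= 1.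
  by move=> n /th01 /andP [a b]; rewrite ltW // ltW.
exists (1 / 5), 1; split; first by rewrite divr_gt0.
split; first by [].
move=> x [/finite_fsetP [S eS] x00].
have xS : x = restr S x.
  apply: funext => k; rewrite /restr; case: ifP => // kS.
  apply/eqP; apply: contraFT kS => nz.
  have : [set k | x k != 0] k by [].
  by rewrite eS.
rewrite xS.
set NF := mTnorm Fam theta (restr S x).
set NG := mTnorm (Gfam Fam m) theta (restr S x).
have NF0 : 0 <= NF.
  apply: le_trans (NN_le_mT x Fam t01 0 S); exact: NN_ge0.
have i1 : NG <= NF.
  apply: mT_le => // j.
  apply: le_trans (easy x Fam m th01 j S) (NN_le_mT x Fam t01 j S).
set M := famnorm (Fam 0%N) (restr S x).
have i4 : M <= NG.
  have := NN_le_mT x (Gfam Fam m) t01 0 S; exact.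
have NG0 : 0 <= NG by apply: le_trans i4; apply: fam_ge0.
have i2 : NF <= NG + phi x S.
  apply: mT_le; last by rewrite addr_ge0 // phi_ge0.
  move=> j; apply: le_trans (hard x reg th01 thmono m0 mS mhalf j S) _.
  by rewrite lerD2r; apply: NN_le_mT.
have M0 : 0 <= M by apply: fam_ge0.
have xM : forall i, i \in S -> `|x i| <= M.
  move=> i iS; case: (posnP i) => [->|ip]; first by rewrite x00 normr0.
  have := fam_el x S (h0 i ip); rewrite big_seq_fset1 /restr iS; exact.
have i3 : phi x S <= 4 * M.
  apply: le_trans (_ : \sum_(i <- S) (w R i * M) <= _).
    rewrite /phi /gs !big_seq; apply: ler_sum => i iS.
    by apply: ler_wpM2l; [apply: w_ge0|apply: xM].
  rewrite -mulr_suml ler_wpM2r //.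
  rewrite /w; apply: le_trans (@w_sum R ((\max_(i <- S) i).+1) S _) _.
    by move=> i iS; rewrite ltnS; apply: (leq_bigmax_seq (F := id)).
  by rewrite lerBlDr lerDl mulr_ge0 // exprn_ge0.
split; last by rewrite mul1r.
lra.
Qed.
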